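(* Let $p$ be a prime, $k \geq 1$, $d = p^k$, and let $\Omega$ be a set with $d$ elements, $S_d = \mathrm{Aut}(\Omega)$. Let $G \subset S_d$ be a primitive solvable subgroup. Then every element $g \in G$ with $g \neq 1_G$ has at most $p^{k-1}$ fixed points on $\Omega$, i.e. $\#\{x \in \Omega : gx = x\} \leq p^{k-1}$.
   Context: A subgroup $G \subset \mathrm{Aut}(\Omega)$ is primitive if it is transitive and the stabilizer $G_x$ of a point $x\in\Omega$ is a maximal subgroup of $G$. *)

(* Defs.v *)
From mathcomp Require Import all_boot all_fingroup all_solvable.
Set Implicit Arguments. Unset Strict Implicit. Unset Printing Implicit Defensive.
Local Open Scope group_scope.

Definition primitive_perm_group (T : finType) (G : {group {perm T}}) : Prop :=
  [transitive G, on [set: T] | 'P] /\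
  (exists x : T, maximal 'C_G[x | 'P] G).

(* Main.v *)
Require Import Defs.
From mathcomp Require Import all_boot all_fingroup all_solvable.
Local Open Scope group_scope.

Lemma dvd_lt_pow (p k d : nat) : prime p -> (d %| p ^ k)%N -> d != (p ^ k)%N ->
  (d <= p ^ k.-1)%N.
Proof.
move=> pr /(dvdn_pfactor _ _ pr) [m lemk ->] ne.
have ltmk : (m < k)%N.
  by rewrite ltn_neqAle lemk andbT; apply: contraNneq ne => ->.
by rewrite leq_pexp2l ?prime_gt0 // -ltnS prednK // (leq_ltn_trans _ ltmk).
Qed.

Theorem proposition2p2 (p k : nat) (T : finType) (G : {group {perm T}}) :
  prime p -> (1 <= k)%N -> #|T| = (p ^ k)%N ->
  primitive_perm_group G -> solvable G ->
  forall g : {perm T}, g \in G -> g != 1 ->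
  (#|[set x : T | g x == x]| <= p ^ k.-1)%N.
Proof.
move=> pr_p k1 cardT [trG [x maxC]] solG g Gg ntg.
have primG : [primitive G, on [set: T] | 'P].
  by rewrite (trans_prim_astab (in_setT x) trG) /maximal_eq maxC orbT.
have ntG : G :!=: 1 by apply/trivgPn; exists g.
have [N [sNG nsNG ntN abN]] := solvable_norm_abelem solG (normal_refl G) ntG.
have cNN : abelian N := abelem_abelian abN.
have trN : [transitive N, on [set: T] | 'P].
  case: (prim_trans_norm primG nsNG) => // sNC.
  case/negP: ntN; rewrite -subG1; apply/subsetP => n Nn; rewrite inE; apply/eqP/permP => y.
  have := subsetP sNC n Nn; rewrite inE => /andP[_ /astabP].
  by move/(_ y (in_setT y)); rewrite perm1 /=.
have reg : forall x0 n m, n \in N -> m \in N -> n x0 = m x0 -> n = m.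
  move=> x0 n m Nn Nm e; apply/permP => y.
  have [a Na ->] := atransP2 trN (in_setT x0) (in_setT y).
  rewrite /= !apermE -!permM.
  have cna : commute a n by apply: (centsP cNN).
  have cma : commute a m by apply: (centsP cNN).
  by rewrite cna cma !permM e.
set F := [set y | g y == y].
have [-> | [x0 Fx0]] := set_0Vmem F; first by rewrite cards0.
have gx0 : g x0 = x0 by move: Fx0; rewrite inE => /eqP.
set C := 'C_N[g].
have injC : {in N &, injective (fun n : {perm T} => n x0)}.
  by move=> n m Nn Nm; apply: reg.
have defF : F = (fun n : {perm T} => n x0) @: C.
  apply/setP => y; apply/idP/imsetP.
  - rewrite inE => /eqP gy.
    have [n Nn ey] := atransP2 trN (in_setT x0) (in_setT y).
    rewrite /= apermE in ey.
    exists n => //; rewrite inE Nn; apply/cent1P.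
    have Nng : n ^ g \in N by rewrite memJ_norm // (subsetP (normal_norm nsNG)).
    have e2 : n ^ g = n.
      apply: (reg x0) => //.
      have : (g * n ^ g) x0 = (n * g) x0 by rewrite -conjgC.
      by rewrite !permM gx0 -ey gy.
    by rewrite /commute conjgC e2.
  - move=> [n]; rewrite inE => /andP[Nn /cent1P cng] ->.
    by rewrite inE -permM cng permM gx0.
have cardF : #|F| = #|C|.
  have sCN : {subset C <= N} by move=> n; rewrite inE => /andP[].
  by rewrite defF (card_in_imset (sub_in2 sCN injC)).
have cardN : #|T| = #|N|.
  rewrite -cardsT; have -> : [set: T] = (fun n : {perm T} => n x0) @: N.
    apply/setP => y; rewrite in_setT; apply/esym/imsetP.
    have [m Nm ey] := atransP2 trN (in_setT x0) (in_setT y).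
    by exists m => //; rewrite ey /= apermE.
  by rewrite (card_in_imset injC).
rewrite cardF; apply: (@dvd_lt_pow p k _ pr_p).
  by rewrite -cardT cardN cardSg // subsetIl.
apply/eqP => eC; case/eqP: ntg; apply/permP => y; rewrite perm1.
have eF : F = [set: T].
  by apply/eqP; rewrite eqEcard subsetT cardsT cardF eC cardT leqnn.
by have := in_setT y; rewrite -eF inE => /eqP.
Qed.
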